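(* Let $X,Y$ be finite abelian groups and $Q\in M_{X\times Y}(\mathbb T)$ arbitrary. Then for $i,j\in X$ the matrix $\sum_{a\in Y}W_{ia,jb}$ does not depend on $b\in Y$, and there is a $*$-representation $\pi:C(Y\wr_*X)\to M_{X\times Y}(\mathbb C)$ with $$\pi(u_{ab}^{(i)})=\sum_{j\in X}W_{ia,jb},\qquad \pi(v_{ij})=\sum_{a\in Y}W_{ia,jb},$$ such that $\pi_Q=\pi\circ\Phi$, where $\Phi:C(S^+_{X\times Y})\to C(Y\wr_*X)$ is the morphism $u_{ia,jb}\mapsto u^{(i)}_{ab}v_{ij}$.
   Context: Finite abelian groups are written additively. For a finite abelian group $Z\simeq\mathbb Z_{N_1}\times\cdots\times\mathbb Z_{N_s}$, $F_Z=F_{N_1}\otimes\cdots\otimes F_{N_s}$ with $F_n=(e^{2\pi ijk/n})_{j,k\in\mathbb Z_n}$. Let $F=F_X$, $L=F_Y$, $M=|X|$, $N=|Y|$, and $(W_{ia,jb})_{kc,ld}=\frac{1}{MN}\frac{Q_{ic}Q_{jd}}{Q_{id}Q_{jc}}F_{i-j,k-l}L_{a-b,c-d}$. $C(S_Z^+)$ is the universal $C^*$-algebra generated by the entries of a magic matrix indexed by a finite set $Z$ (entries orthogonal projections, rows and columns summing to $1$), with $\Delta(u_{ij})=\sum_ku_{ik}\otimes u_{kj}$; $\pi_Q:C(S^+_{X\times Y})\to M_{X\times Y}(\mathbb C)$ is $u_{ia,jb}\mapsto W_{ia,jb}$. $C(Y)$ is regarded as the quotient of $C(S_Y^+)$ by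 the relations $u_{ab}=u_{cd}$ whenever $a-b=c-d$ (so $u_{ab}$ is the indicator function of $a-b$), and similarly $C(X)$ as a quotient of $C(S_X^+)$ with generators $v_{ij}$. The free wreath product $C(Y\wr_*X)$ is the quotient of the free product $C(Y)^{*X}*C(X)$ (with $u^{(i)}_{ab}$ the generators of the $i$-th copy of $C(Y)$) by the relations $[u^{(i)}_{ab},v_{ij}]=0$, with the Hopf structure making $w_{ia,jb}=u^{(i)}_{ab}v_{ij}$ a magic corepresentation. *)

(* Defs.v *)
From mathcomp Require Import all_boot all_order all_algebra.
From mathcomp Require Import reals trigo.
From mathcomp Require Import complex.

Set Implicit Arguments.
Unset Strict Implicit.
Unset Printing Implicit Defensive.

Import GRing.Theory Num.Theory.
Local Open Scope ring_scope.
Local Open Scope complex_scope.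

(* Finite abelian groups  Z = Z_{N_0} x ... x Z_{N_{s-1}}  (with 1 < N k).   *)

Definition agrp (s : nat) (N : 'I_s -> nat) : finType :=
  {dffun forall k : 'I_s, 'Z_(N k)}.

Definition gsub (s : nat) (N : 'I_s -> nat) (x y : agrp N) : agrp N :=
  [ffun k => x k - y k].

Definition omega (R : realType) (n : nat) : R[i] :=
  cos (2 * pi / n%:R) +i* sin (2 * pi / n%:R).

Definition fourier (R : realType) (s : nat) (N : 'I_s -> nat)
  (x y : agrp N) : R[i] :=
  \prod_(k < s) omega R (N k) ^+ ((x k : nat) * (y k : nat))%N.

(* Matrices in M_{X x Y}(C), indexed through an enumeration of X x Y.        *)

Definition idx (T : finType) := #|{: T}|.

Definition mxof (R : realType) (T : finType) (f : T -> T -> R[i])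
  : 'M[R[i]]_(idx T) :=
  \matrix_(p, q) f (enum_val p) (enum_val q).

Definition adj (R : realType) (n : nat) (A : 'M[R[i]]_n) : 'M[R[i]]_n :=
  (map_mx conjc A)^T.

Definition Wmx (R : realType) (s : nat) (N : 'I_s -> nat)
  (t : nat) (Nt : 'I_t -> nat) (Q : agrp N -> agrp Nt -> R[i])
  (i : agrp N) (a : agrp Nt) (j : agrp N) (b : agrp Nt)
  : 'M[R[i]]_(idx (agrp N * agrp Nt)%type) :=
  mxof (fun kc ld : (agrp N * agrp Nt)%type =>
    let k := kc.1 in let c := kc.2 in let l := ld.1 in let d := ld.2 in
    ((idx (agrp N))%:R * (idx (agrp Nt))%:R)^-1
      * (Q i c * Q j d / (Q i d * Q j c))
      * fourier R (gsub i j) (gsub k l)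
      * fourier R (gsub a b) (gsub c d)).

(* A *-representation of a universal C*-algebra given by generators and      *)
(* relations is the same as an assignment of the generators satisfying the   *)
(* relations; it acts on every *-polynomial in the generators by evaluation. *)

Inductive sexpr (K G : Type) : Type :=
  | SGen of G
  | SZero
  | SOne
  | SAdd of sexpr K G & sexpr K G
  | SMul of sexpr K G & sexpr K G
  | SScale of K & sexpr K G
  | SStar of sexpr K G.

Arguments SZero {K G}.
Arguments SOne {K G}.

Fixpoint seval (R : realType) (n : nat) (G : Type) (rho : G -> 'M[R[i]]_n)
  (e : sexpr R[i] G) : 'M[R[i]]_n :=
  match e with
  | SGen g => rho g
  | SZero => 0
  | SOne => 1%:M
  | SAdd e1 e2 => seval rho e1 + seval rho e2
  | SMul e1 e2 => seval rho e1 *m seval rho e2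
  | SScale c e1 => c *: seval rho e1
  | SStar e1 => adj (seval rho e1)
  end.

Fixpoint ssubst (K G H : Type) (f : G -> sexpr K H) (e : sexpr K G)
  : sexpr K H :=
  match e with
  | SGen g => f g
  | SZero => SZero
  | SOne => SOne
  | SAdd e1 e2 => SAdd (ssubst f e1) (ssubst f e2)
  | SMul e1 e2 => SMul (ssubst f e1) (ssubst f e2)
  | SScale c e1 => SScale c (ssubst f e1)
  | SStar e1 => SStar (ssubst f e1)
  end.

Definition is_proj (R : realType) (n : nat) (P : 'M[R[i]]_n) : Prop :=
  P *m P = P /\ adj P = P.

Definition magic (R : realType) (n : nat) (I : finType)
  (u : I -> I -> 'M[R[i]]_n) : Prop :=
  (forall p q, is_proj (u p q)) /\
  (forall p, \sum_(q : I) u p q = 1%:M) /\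
  (forall q, \sum_(p : I) u p q = 1%:M).

(* C(Z) as the quotient of C(S_Z^+) by  u_ab = u_cd  whenever a-b = c-d *)
Definition grp_rel (R : realType) (n : nat) (s : nat) (N : 'I_s -> nat)
  (u : agrp N -> agrp N -> 'M[R[i]]_n) : Prop :=
  magic u /\ (forall a b c d, gsub a b = gsub c d -> u a b = u c d).

(* generators of the free wreath product C(Y wr_* X) *)
Inductive wgen (X Y : Type) : Type :=
  | WU of X & Y & Y
  | WV of X & X.

Definition wreath_rep (R : realType) (n : nat) (s : nat) (N : 'I_s -> nat)
  (t : nat) (Nt : 'I_t -> nat)
  (pi : wgen (agrp N) (agrp Nt) -> 'M[R[i]]_n) : Prop :=
  (forall i, grp_rel (fun a b => pi (WU i a b))) /\
  grp_rel (fun i j => pi (WV _ i j)) /\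
  (forall i j a b, pi (WU i a b) *m pi (WV _ i j) = pi (WV _ i j) *m pi (WU i a b)).

Definition Phi (K : Type) (X Y : Type) (e : sexpr K ((X * Y) * (X * Y))%type)
  : sexpr K (wgen X Y) :=
  ssubst (fun g : ((X * Y) * (X * Y))%type =>
            SMul (SGen K (WU g.1.1 g.1.2 g.2.2)) (SGen K (WV Y g.1.1 g.2.1))) e.

Definition piQ (R : realType) (s : nat) (N : 'I_s -> nat)
  (t : nat) (Nt : 'I_t -> nat) (Q : agrp N -> agrp Nt -> R[i])
  (g : ((agrp N * agrp Nt) * (agrp N * agrp Nt))%type) :=
  Wmx Q g.1.1 g.1.2 g.2.1 g.2.2.

(* Main.v *)
Require Import Defs.
From mathcomp Require Import all_boot all_order all_algebra.
From mathcomp Require Import reals trigo.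
From mathcomp Require Import complex.
From mathcomp Require Import ring lra.
Import Order.TTheory GRing.Theory Num.Theory.
Set Implicit Arguments. Unset Strict Implicit. Unset Printing Implicit Defensive.
Local Open Scope ring_scope.
Local Open Scope complex_scope.
Section S.
Variable R : realType.
Lemma cmulE (a b c d : R) : (a +i* b) * (c +i* d) = (a*c - b*d) +i* (a*d + b*c).
Proof. by []. Qed.
Lemma omegaX n m : omega R n ^+ m = cos (m%:R * (2 * pi / n%:R)) +i* sin (m%:R * (2 * pi / n%:R)).
Proof.
set th := (2 * pi / n%:R).
elim: m => [|m IH]; first by rewrite expr0 mul0r cos0 sin0.
rewrite exprS IH /omega -/th cmulE.
have -> : m.+1%:R * th = th + m%:R * th by rewrite -[m.+1]add1n natrD mulrDl mul1r.
rewrite cosD sinD; congr (_ +i* _); ring.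
Qed.
Lemma omega_n n : (0 < n)%N -> omega R n ^+ n = 1.
Proof.
move=> n0; rewrite omegaX.
have -> : n%:R * (2 * pi / n%:R) = pi *+ 2 :> R.
  rewrite -mulr_natr; field; by rewrite pnatr_eq0 -lt0n.
by rewrite cos2pi sin2pi.
Qed.
Lemma omega_neq1 n m : (0 < m < n)%N -> omega R n ^+ m != 1.
Proof.
case/andP=> m0 mn; rewrite omegaX.
apply/negP=> /eqP[] hc _.
pose x : R := pi * m%:R / n%:R.
have hx : m%:R * (2 * pi / n%:R) = x *+ 2.
  by rewrite /x -mulr_natl; field; rewrite pnatr_eq0 -lt0n (ltn_trans m0 mn).
have : 0 < sin x.
  apply: sin_gt0_pi; apply/andP; split.
    by rewrite /x divr_gt0 ?mulr_gt0 ?pi_gt0 ?ltr0n // (ltn_trans m0 mn).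
  rewrite /x ltr_pdivrMr ?ltr0n ?(ltn_trans m0 mn) // ltr_pM2l ?pi_gt0 // ltr_nat //.
move: hc; rewrite hx cos_mulr2n cos2sin2 => hc.
have : sin x ^+ 2 = 0 by lra.
move/eqP; rewrite expf_eq0 /= => /eqP ->; by rewrite ltxx.
Qed.
End S.
From HB Require Import structures.
Section Grp.
Variables (s : nat) (N : 'I_s -> nat).
Definition gadd (x y : agrp N) : agrp N := [ffun k => x k + y k].
Definition gopp (x : agrp N) : agrp N := [ffun k => - x k].
Definition gzero : agrp N := [ffun k => 0].
Lemma gaddA : associative gadd.
Proof. by move=> x y z; apply/ffunP=> k; rewrite !ffunE addrA. Qed.
Lemma gaddC : commutative gadd.
Proof. by move=> x y; apply/ffunP=> k; rewrite !ffunE addrC. Qed.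
Lemma gadd0 : left_id gzero gadd.
Proof. by move=> x; apply/ffunP=> k; rewrite !ffunE add0r. Qed.
Lemma gaddN : left_inverse gzero gopp gadd.
Proof. by move=> x; apply/ffunP=> k; rewrite !ffunE addNr. Qed.
Lemma gadd0r x : gadd x gzero = x.
Proof. by rewrite gaddC gadd0. Qed.
Lemma gaddNr x : gadd x (gopp x) = gzero.
Proof. by rewrite gaddC gaddN. Qed.
Lemma gsubE (x y : agrp N) : gsub x y = gadd x (gopp y).
Proof. by apply/ffunP=> k; rewrite !ffunE. Qed.
Lemma gaddKr y : cancel (gadd^~ y) (gadd^~ (gopp y)).
Proof. by move=> x; rewrite -gaddA gaddNr gadd0r. Qed.
Lemma gaddIr y : injective (gadd^~ y).
Proof. exact: can_inj (gaddKr y). Qed.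
Lemma goppK : involutive gopp.
Proof. by move=> x; apply/ffunP=> k; rewrite !ffunE opprK. Qed.
Lemma goppD x y : gopp (gadd x y) = gadd (gopp x) (gopp y).
Proof. by apply/ffunP=> k; rewrite !ffunE opprD. Qed.
Lemma gsub_eq0 x y : (gsub x y == gzero) = (x == y).
Proof.
apply/eqP/eqP=> [h|->]; last by rewrite gsubE gaddNr.
by rewrite -(gaddKr (gopp y) x) goppK -gsubE h gadd0.
Qed.
Lemma gsubK (x : agrp N) : involutive (gsub x).
Proof. by move=> y; apply/ffunP=> k; rewrite !ffunE opprB addrC subrK. Qed.
Lemma gsub_inj (x : agrp N) : injective (gsub x).
Proof. exact: inv_inj (gsubK x). Qed.
Lemma gsub_split (k l m : agrp N) : gsub k l = gadd (gsub k m) (gsub m l).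
Proof. by apply/ffunP=> q; rewrite !ffunE addrA subrK. Qed.
Lemma gsub_opp (l m : agrp N) : gsub l m = gopp (gsub m l).
Proof. by apply/ffunP=> q; rewrite !ffunE opprB. Qed.
Lemma gsub_addr (i j : agrp N) : gsub (gadd i j) j = i.
Proof. by apply/ffunP=> q; rewrite !ffunE addrK. Qed.
Lemma gsubxx (x : agrp N) : gsub x x = gzero.
Proof. by apply/ffunP=> q; rewrite !ffunE subrr. Qed.
Lemma eq_gsub2 (i j j' : agrp N) : (gsub i j == gsub i j') = (j == j').
Proof. by rewrite (inj_eq (@gsub_inj i)). Qed.
End Grp.
Arguments gzero {s N}.
Lemma mul1_inv (R : realType) (x y : R[i]) : x * y = 1 -> y = x^-1.
Proof.
move=> h; have xn0 : x != 0 by apply/eqP=> x0; move: h; rewrite x0 mul0r => /eqP; rewrite eq_sym oner_eq0.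
by rewrite -[y]mul1r -(mulVf xn0) -mulrA h mulr1.
Qed.
Lemma conjcX (R : realType) (x : R[i]) n : conjc (x ^+ n) = (conjc x) ^+ n.
Proof. exact: rmorphXn. Qed.
Lemma conjcM (R : realType) (x y : R[i]) : conjc (x * y) = conjc x * conjc y.
Proof. exact: rmorphM. Qed.
Lemma conjcV (R : realType) (x : R[i]) : conjc (x^-1) = (conjc x)^-1.
Proof. exact: fmorphV. Qed.
Lemma conjcN (R : realType) n : conjc (n%:R : R[i]) = n%:R.
Proof. exact: conjc_nat. Qed.
Lemma conjc_prod (R : realType) (I : finType) (E : I -> R[i]) : conjc (\prod_i E i) = \prod_i conjc (E i).
Proof. exact: rmorph_prod. Qed.
Lemma omega_conj (R : realType) n : conjc (omega R n) = (omega R n)^-1.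
Proof.
apply: mul1_inv; rewrite /omega /conjc cmulE.
set c := cos _; set x := sin _.
have h : c ^+ 2 + x ^+ 2 = 1 by rewrite /c /x cos2Dsin2.
congr (_ +i* _); [rewrite -h | ]; ring.
Qed.
Section Four.
Variables (R : realType) (s : nat) (N : 'I_s -> nat) (hN : forall k, (1 < N k)%N).
Local Notation F := (@fourier R s N).
Lemma valZadd n (x y : 'Z_n) : ((x + y)%R : nat) = (((x : nat) + y) %% (Zp_trunc n).+2)%N.
Proof. by []. Qed.
Lemma omega_mod n a b : (0 < n)%N -> omega R n ^+ ((a %% n) * b)%N = omega R n ^+ (a * b)%N.
Proof.
move=> n0; rewrite -(expr_mod _ (omega_n R n0)) modnMml expr_mod //; exact: omega_n.
Qed.
Lemma omega_mod' n p a b : p = n -> (0 < n)%N -> omega R n ^+ ((a %% p) * b)%N = omega R n ^+ (a * b)%N.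
Proof. by move=> ->; apply: omega_mod. Qed.
Lemma FaddL x y z : F (gadd x y) z = F x z * F y z.
Proof.
rewrite /fourier -big_split /=; apply: eq_bigr => k _.
rewrite ffunE valZadd (omega_mod' _ _ (Zp_cast (hN k))) ?(ltn_trans _ (hN k)) // mulnDl exprD //.
Qed.
Lemma FC x y : F x y = F y x.
Proof. by rewrite /fourier; apply: eq_bigr => k _; rewrite mulnC. Qed.
Lemma F0L z : F gzero z = 1.
Proof. by rewrite /fourier big1 // => k _; rewrite ffunE mul0n expr0. Qed.
Lemma FaddR x y z : F x (gadd y z) = F x y * F x z.
Proof. by rewrite FC FaddL !(FC x). Qed.
Lemma F0R z : F z gzero = 1.
Proof. by rewrite FC F0L. Qed.
Lemma F_neq0 x z : F x z != 0.
Proof. by apply/eqP=> h; have := FaddL x (gopp x) z; rewrite h mul0r gaddNr F0L; move/eqP; rewrite oner_eq0. Qed.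
Lemma FNL x z : F (gopp x) z = (F x z)^-1.
Proof.
have h : F (gopp x) z * F x z = 1 by rewrite -FaddL gaddN F0L.
by rewrite -[LHS]mulr1 -(mulfV (F_neq0 x z)) mulrA h mul1r.
Qed.
Lemma FNR x z : F x (gopp z) = (F x z)^-1.
Proof. by rewrite FC FNL FC. Qed.
Lemma Fsum x : \sum_(z : agrp N) F x z = (x == gzero)%:R * (idx (agrp N))%:R.
Proof.
have [->|nx] := eqVneq x gzero.
  by rewrite mul1r (eq_bigr (fun _ => 1)) ?sumr_const // => z _; rewrite F0L.
rewrite mul0r.
have [k xk] : exists k, x k != 0.
  apply/existsP; apply: contraR nx; rewrite negb_exists => /forallP h.
  by apply/eqP/ffunP=> k; rewrite ffunE; move: (h k); rewrite negbK => /eqP.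
pose e : agrp N := [ffun k' => if k' == k then 1 else 0].
have Fe : F x e = omega R (N k) ^+ (x k : nat).
  rewrite /fourier (bigD1 k) //= big1 ?mulr1.
    by rewrite ffunE eqxx /= modn_small ?muln1.
  by move=> k' nk; rewrite ffunE (negPf nk) muln0 expr0.
have Fe1 : F x e != 1.
  rewrite Fe; apply: omega_neq1; apply/andP; split.
    by rewrite lt0n; apply: contra xk => /eqP h; apply/eqP/val_inj.
  by move: (ltn_ord (x k)) (Zp_cast (hN k)); move: (nat_of_ord (x k)) => m; move=> + <-.
set S := \sum_(z : agrp N) F x z.
have hS : S = F x e * S.
  rewrite {1}/S (reindex_inj (@gaddIr _ _ e)) /= /S mulr_sumr; apply: eq_bigr => z _.
  by rewrite FaddR mulrC.
have : (1 - F x e) * S = 0 by rewrite mulrBl mul1r -hS subrr.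
move/eqP; rewrite mulf_eq0 subr_eq0 eq_sym (negPf Fe1) /=; by move/eqP.
Qed.
Lemma SumR i w : \sum_(j : agrp N) F w (gsub i j) = (w == gzero)%:R * (idx (agrp N))%:R.
Proof. by rewrite -(Fsum w) [RHS](reindex_inj (@gsub_inj _ _ i)). Qed.
Lemma SumL1 i w : \sum_(j : agrp N) F (gsub i j) w = (w == gzero)%:R * (idx (agrp N))%:R.
Proof. by rewrite -(SumR i); apply: eq_bigr => j _; rewrite FC. Qed.
Lemma SumL2 j w : \sum_(i : agrp N) F (gsub i j) w = (w == gzero)%:R * (idx (agrp N))%:R.
Proof.
rewrite -(Fsum w) (reindex_inj (@gaddIr _ _ j)) /=; apply: eq_bigr => z _.
by rewrite gsub_addr FC.
Qed.
Lemma CV x y k m : \sum_(l : agrp N) F x (gsub k l) * F y (gsub l m)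
  = (idx (agrp N))%:R * (x == y)%:R * F x (gsub k m).
Proof.
transitivity (F x (gsub k m) * \sum_(l : agrp N) F (gsub x y) (gsub m l)).
  rewrite mulr_sumr; apply: eq_bigr => l _.
  rewrite (gsub_split k l m) FaddR -mulrA; congr (_ * _).
  by rewrite (gsub_opp l m) FNR -FNL -FaddL (gsubE x y).
by rewrite SumR gsub_eq0 mulrC; congr (_ * _); exact: mulrC.
Qed.
Lemma Fconj x z : conjc (F x z) = (F x z)^-1.
Proof.
rewrite /fourier conjc_prod -prodfV; apply: eq_bigr => k _.
by rewrite conjcX omega_conj exprVn.
Qed.
End Four.
Section Mx.
Variables (R : realType) (T : finType).
Lemma sum_enum (G : T -> R[i]) : \sum_(p < idx T) G (enum_val p) = \sum_(x : T) G x.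
Proof.
by rewrite (reindex (@enum_val T T)) //; apply: onW_bij; exact: enum_val_bij.
Qed.
Lemma mxofM (f g : T -> T -> R[i]) :
  mxof f *m mxof g = mxof (fun x z => \sum_y f x y * g y z).
Proof.
apply/matrixP=> p q; rewrite !mxE.
rewrite -(sum_enum (fun y => f (enum_val p) y * g y (enum_val q))).
by apply: eq_bigr => j _; rewrite !mxE.
Qed.
Lemma mxof1 : (1%:M : 'M[R[i]]_(idx T)) = mxof (fun x y => (x == y)%:R).
Proof. by apply/matrixP=> p q; rewrite !mxE (inj_eq enum_val_inj). Qed.
Lemma mxof_adj (f : T -> T -> R[i]) : adj (mxof f) = mxof (fun x y => conjc (f y x)).
Proof. by apply/matrixP=> p q; rewrite !mxE. Qed.
Lemma mxof_sum (I : finType) (f : I -> T -> T -> R[i]) :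
  \sum_(j : I) mxof (f j) = mxof (fun x y => \sum_j f j x y).
Proof. by apply/matrixP=> p q; rewrite !mxE summxE; apply: eq_bigr => j _; rewrite mxE. Qed.
Lemma mxof_eq (f g : T -> T -> R[i]) : (forall x y, f x y = g x y) -> mxof f = mxof g.
Proof. by move=> h; apply/matrixP=> p q; rewrite !mxE h. Qed.
Lemma mxof0 : mxof (fun _ _ => 0) = (0 : 'M[R[i]]_(idx T)).
Proof. by apply/matrixP=> p q; rewrite !mxE. Qed.
Lemma adjD n (A B : 'M[R[i]]_n) : adj (A + B) = adj A + adj B.
Proof. by apply/matrixP=> p q; rewrite !mxE rmorphD. Qed.
Lemma adj_sum n (I : finType) (A : I -> 'M[R[i]]_n) : adj (\sum_j A j) = \sum_j adj (A j).
Proof.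
apply/matrixP=> p q; rewrite !mxE !summxE rmorph_sum; apply: eq_bigr => j _; by rewrite !mxE.
Qed.
End Mx.
Lemma sum_ifP (R : realType) n (I : finType) (x0 : I) (F : I -> 'M[R[i]]_n) (P : pred I) (c : bool) :
  (forall x, P x = c && (x == x0)) -> \sum_x (if P x then F x else 0) = if c then F x0 else 0.
Proof.
move=> hP; rewrite (bigD1 x0) //= hP eqxx andbT big1 ?addr0 // => x nx.
by rewrite hP (negPf nx) andbF.
Qed.
Lemma eq_gsub1 (s : nat) (N : 'I_s -> nat) (a a' b : agrp N) : (gsub a b == gsub a' b) = (a == a').
Proof. by rewrite !gsubE (inj_eq (@gaddIr _ _ _)). Qed.
Section Main.
Variables (R : realType) (s : nat) (N : 'I_s -> nat) (hN : forall k, (1 < N k)%N)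
  (t : nat) (Nt : 'I_t -> nat) (hNt : forall k, (1 < Nt k)%N)
  (Q : agrp N -> agrp Nt -> R[i]) (hQ : forall x y, `|Q x y| = 1).
Local Notation X := (agrp N).
Local Notation Y := (agrp Nt).
Local Notation FX := (fourier R (N:=N)).
Local Notation FY := (fourier R (N:=Nt)).
Local Notation MX := ((idx X)%:R : R[i]).
Local Notation NY := ((idx Y)%:R : R[i]).
Let C : R[i] := (MX * NY)^-1.
Lemma MXn0 : MX != 0.
Proof. by rewrite pnatr_eq0 -lt0n; apply/card_gt0P; exists gzero. Qed.
Lemma NYn0 : NY != 0.
Proof. by rewrite pnatr_eq0 -lt0n; apply/card_gt0P; exists gzero. Qed.
Lemma Qn0 x y : Q x y != 0.
Proof. by rewrite -normr_eq0 hQ oner_eq0. Qed.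
Definition Wf (i : X) (a : Y) (j : X) (b : Y) (kc ld : X * Y) : R[i] :=
  C * (Q i kc.2 * Q j ld.2 / (Q i ld.2 * Q j kc.2)) * FX (gsub i j) (gsub kc.1 ld.1)
    * FY (gsub a b) (gsub kc.2 ld.2).
Lemma WmxE i a j b : Wmx Q i a j b = mxof (Wf i a j b).
Proof. by []. Qed.
Lemma Wf_prod i a j b a' j' b' kc me :
  \sum_(p : X * Y) Wf i a j b kc p * Wf i a' j' b' p me
  = ((j == j') && (gsub a b == gsub a' b'))%:R * Wf i a j b kc me.
Proof.
case: kc => k c; case: me => m e.
pose K := C * C * (Q i c / Q i e).
pose A l := FX (gsub i j) (gsub k l) * FX (gsub i j') (gsub l m).
pose B d := (Q j d * Q j' e / (Q j c * Q j' d)) *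
  (FY (gsub a b) (gsub c d) * FY (gsub a' b') (gsub d e)).
transitivity (\sum_(p : X * Y) K * A p.1 * B p.2).
  apply: eq_bigr => [[l d]] _; rewrite /Wf /K /A /B /=.
  by field; rewrite !Qn0.
rewrite -(pair_bigA _ (fun l d => K * A l * B d)) /=.
transitivity (K * ((\sum_l A l) * (\sum_d B d))).
  rewrite mulr_suml mulr_sumr; apply: eq_bigr => l _.
  by rewrite mulrA mulr_sumr.
rewrite /A (CV _ hN) eq_gsub2.
case: eqP => [ejj|njj] /=; last by rewrite !(mulr0, mul0r).
subst j'.
have -> : \sum_d B d = (Q j e / Q j c) *
   \sum_d FY (gsub a b) (gsub c d) * FY (gsub a' b') (gsub d e).
  rewrite mulr_sumr; apply: eq_bigr => d _; rewrite /B; congr (_ * _).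
  by field; rewrite !Qn0.
rewrite (CV _ hNt) /=.
case: (gsub a b == gsub a' b') => /=; last by rewrite !(mulr0, mul0r).
rewrite /K /Wf /C /=.
by field; rewrite !Qn0 MXn0 NYn0.
Qed.
Lemma Qconj x y : conjc (Q x y) = (Q x y)^-1.
Proof. by apply: mul1_inv; have := sqr_normc (Q x y); rewrite hQ expr1n => <-. Qed.
Lemma W_prod i a j b a' j' b' :
  Wmx Q i a j b *m Wmx Q i a' j' b'
  = if (j == j') && (gsub a b == gsub a' b') then Wmx Q i a j b else 0.
Proof.
rewrite !WmxE mxofM; case: ifP => h; last rewrite -mxof0;
  by apply: mxof_eq => x z; rewrite Wf_prod h ?mul1r ?mul0r.
Qed.
Lemma W_adj i a j b : adj (Wmx Q i a j b) = Wmx Q i a j b.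
Proof.
rewrite WmxE mxof_adj; apply: mxof_eq => [[k c] [l d]]; rewrite /Wf /C /=.
rewrite !(conjcM, conjcV) !Qconj !Fconj !conjcN (gsub_opp l k) (gsub_opp d c) !(FNR _ hN, FNR _ hNt) !invrK.
by field; rewrite !Qn0 MXn0 NYn0.
Qed.
Definition Vf (i j : X) (kc ld : X * Y) : R[i] :=
  MX^-1 * (kc.2 == ld.2)%:R * FX (gsub i j) (gsub kc.1 ld.1).
Lemma V_sum i j b : \sum_(a : Y) Wmx Q i a j b = mxof (Vf i j).
Proof.
under eq_bigr do rewrite WmxE.
rewrite mxof_sum; apply: mxof_eq => [[k c] [l d]]; rewrite /Wf /Vf /C /=.
rewrite -mulr_sumr (SumL2 _ hNt) gsub_eq0.
case: eqP => [<-|_] /=; last by rewrite !(mulr0, mul0r).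
by field; rewrite !Qn0 MXn0 NYn0.
Qed.
Lemma Wsum_row i a k c l d :
  \sum_(b : Y) \sum_(j : X) Wf i a j b (k, c) (l, d) = ((k, c) == (l, d))%:R.
Proof.
rewrite exchange_big /=.
transitivity (\sum_(j : X) (c == d)%:R * (C * NY) * FX (gsub i j) (gsub k l)).
  apply: eq_bigr => j _; rewrite /Wf /=.
  rewrite -mulr_sumr (SumL1 _ hNt) gsub_eq0.
  case: eqP => [<-|_]; last by rewrite !(mulr0, mul0r).
  by field; rewrite !Qn0.
rewrite -mulr_sumr (SumL1 _ hN) gsub_eq0 xpair_eqE.
case: eqP => _; case: eqP => _ /=; rewrite ?(mulr0, mul0r, mulr1, mul1r) //.
by rewrite /C; field; rewrite MXn0 NYn0.
Qed.
Lemma Wsum_col i b k c l d :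
  \sum_(a : Y) \sum_(j : X) Wf i a j b (k, c) (l, d) = ((k, c) == (l, d))%:R.
Proof.
rewrite exchange_big /=.
transitivity (\sum_(j : X) (c == d)%:R * (C * NY) * FX (gsub i j) (gsub k l)).
  apply: eq_bigr => j _; rewrite /Wf /=.
  rewrite -mulr_sumr (SumL2 _ hNt) gsub_eq0.
  case: eqP => [<-|_]; last by rewrite !(mulr0, mul0r).
  by field; rewrite !Qn0.
rewrite -mulr_sumr (SumL1 _ hN) gsub_eq0 xpair_eqE.
case: eqP => _; case: eqP => _ /=; rewrite ?(mulr0, mul0r, mulr1, mul1r) //.
by rewrite /C; field; rewrite MXn0 NYn0.
Qed.
Lemma Vsum_row i k c l d : \sum_(j : X) Vf i j (k, c) (l, d) = ((k, c) == (l, d))%:R.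
Proof.
rewrite /Vf /= -mulr_sumr (SumL1 _ hN) gsub_eq0 xpair_eqE.
case: eqP => _; case: eqP => _ /=; rewrite ?(mulr0, mul0r, mulr1, mul1r) //.
by rewrite mulVf ?MXn0.
Qed.
Lemma Vsum_col j k c l d : \sum_(i : X) Vf i j (k, c) (l, d) = ((k, c) == (l, d))%:R.
Proof.
rewrite /Vf /= -mulr_sumr (SumL2 _ hN) gsub_eq0 xpair_eqE.
case: eqP => _; case: eqP => _ /=; rewrite ?(mulr0, mul0r, mulr1, mul1r) //.
by rewrite mulVf ?MXn0.
Qed.
Lemma UV i a j b : (\sum_(j' : X) Wmx Q i a j' b) *m mxof (Vf i j) = Wmx Q i a j b.
Proof.
rewrite -(V_sum i j b) mulmx_suml.
transitivity (\sum_(j' : X) if j' == j then Wmx Q i a j' b else 0).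
  apply: eq_bigr => j' _; rewrite mulmx_sumr.
  under eq_bigr => a' _ do rewrite W_prod.
  by apply: (@sum_ifP _ _ _ a (fun _ => Wmx Q i a j' b)) => a'; rewrite eq_gsub1 (eq_sym a).
by rewrite (@sum_ifP _ _ _ j (fun j' => Wmx Q i a j' b) _ true) // => x.
Qed.
Lemma VU i a j b : mxof (Vf i j) *m (\sum_(j' : X) Wmx Q i a j' b) = Wmx Q i a j b.
Proof.
rewrite -(V_sum i j b) mulmx_suml.
transitivity (\sum_(a' : Y) if a' == a then Wmx Q i a' j b else 0).
  apply: eq_bigr => a' _; rewrite mulmx_sumr.
  under eq_bigr => j' _ do rewrite W_prod.
  by apply: (@sum_ifP _ _ _ j (fun _ => Wmx Q i a' j b)) => j'; rewrite eq_gsub1 andbC (eq_sym j).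
by rewrite (@sum_ifP _ _ _ a (fun a' => Wmx Q i a' j b) _ true) // => x.
Qed.
Lemma UU i a b : (\sum_(j : X) Wmx Q i a j b) *m (\sum_(j : X) Wmx Q i a j b) = \sum_(j : X) Wmx Q i a j b.
Proof.
rewrite mulmx_suml; apply: eq_bigr => j _; rewrite mulmx_sumr.
under eq_bigr => j' _ do rewrite W_prod.
by rewrite (@sum_ifP _ _ _ j (fun _ => Wmx Q i a j b) _ true) // => x; rewrite eqxx andbT (eq_sym j).
Qed.
Lemma VV i j : mxof (Vf i j) *m mxof (Vf i j) = mxof (Vf i j).
Proof.
rewrite -{1 2 3}(V_sum i j gzero) mulmx_suml; apply: eq_bigr => a _; rewrite mulmx_sumr.
under eq_bigr => a' _ do rewrite W_prod.
by rewrite (@sum_ifP _ _ _ a (fun _ => Wmx Q i a j gzero) _ true) // => x; rewrite eqxx eq_gsub1 (eq_sym a).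
Qed.
Definition piW (g : wgen X Y) : 'M[R[i]]_(idx (X * Y)%type) :=
  match g with
  | WU i a b => \sum_(j : X) Wmx Q i a j b
  | WV i j => mxof (Vf i j)
  end.
Lemma main_result :
  (forall (i j : X) (b b' : Y),
     \sum_(a : Y) Wmx Q i a j b = \sum_(a : Y) Wmx Q i a j b')
  /\
  exists pi : wgen X Y -> 'M[R[i]]_(idx (X * Y)%type),
    wreath_rep pi /\
    (forall i a b, pi (WU i a b) = \sum_(j : X) Wmx Q i a j b) /\
    (forall i j b, pi (WV _ i j) = \sum_(a : Y) Wmx Q i a j b) /\
    (forall e : sexpr R[i] ((X * Y) * (X * Y))%type,
       seval (piQ Q) e = seval pi (Phi e)).
Proof.
split; first by move=> i j b b'; rewrite !V_sum.
exists piW; split; [|split; [by []|split]].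
- split; [|split].
  + move=> i; split; [split; [|split] |].
    * move=> a b; split; first exact: UU.
      by rewrite /= adj_sum; apply: eq_bigr => j _; rewrite W_adj.
    * move=> a /=.
      apply: (eq_trans (y := \sum_(b : Y) mxof (fun x y => \sum_(j : X) Wf i a j b x y))).
        by apply: eq_bigr => b _; exact: (mxof_sum (fun j => Wf i a j b)).
      by rewrite mxof_sum mxof1; apply: mxof_eq => [[k c] [l d]]; exact: Wsum_row.
    * move=> b /=.
      apply: (eq_trans (y := \sum_(a : Y) mxof (fun x y => \sum_(j : X) Wf i a j b x y))).
        by apply: eq_bigr => a _; exact: (mxof_sum (fun j => Wf i a j b)).
      by rewrite mxof_sum mxof1; apply: mxof_eq => [[k c] [l d]]; exact: Wsum_col.
    * by move=> a b a' b' h /=; apply: eq_bigr => j _; rewrite /Wmx h.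
  + split; [split; [|split] |].
    * move=> i j; split; first exact: VV.
      by rewrite /= -(V_sum i j gzero) adj_sum; apply: eq_bigr => a _; rewrite W_adj.
    * move=> i /=; rewrite mxof_sum mxof1; apply: mxof_eq => [[k c] [l d]]; exact: Vsum_row.
    * move=> j /=; rewrite mxof_sum mxof1; apply: mxof_eq => [[k c] [l d]]; exact: Vsum_col.
    * by move=> i j i' j' h /=; rewrite /Vf h.
  + by move=> i j a b /=; rewrite UV VU.
- by move=> i j b /=; rewrite V_sum.
- move=> e; rewrite /Phi; elim: e => [g| | |e1 IH1 e2 IH2|e1 IH1 e2 IH2|c e1 IH|e1 IH] /=;
    rewrite ?IH1 ?IH2 ?IH //.
  by rewrite UV.
Qed.
End Main.

Unset Implicit Arguments.
Theorem proposition3p6 (R : realType)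
  (s : nat) (N : 'I_s -> nat) (hN : forall k, (1 < N k)%N)
  (t : nat) (Nt : 'I_t -> nat) (hNt : forall k, (1 < Nt k)%N)
  (Q : agrp N -> agrp Nt -> R[i]) (hQ : forall x y, `|Q x y| = 1) :
  (forall (i j : agrp N) (b b' : agrp Nt),
     \sum_(a : agrp Nt) Wmx Q i a j b = \sum_(a : agrp Nt) Wmx Q i a j b')
  /\
  exists pi : wgen (agrp N) (agrp Nt) -> 'M[R[i]]_(idx (agrp N * agrp Nt)%type),
    wreath_rep pi /\
    (forall i a b, pi (WU i a b) = \sum_(j : agrp N) Wmx Q i a j b) /\
    (forall i j b, pi (WV _ i j) = \sum_(a : agrp Nt) Wmx Q i a j b) /\
    (forall e : sexpr R[i] ((agrp N * agrp Nt) * (agrp N * agrp Nt))%type,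
       seval (piQ Q) e = seval pi (Phi e)).
Proof. exact: (main_result hN hNt hQ). Qed.
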